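(* Let $a$ and $b$ be relatively prime integers with $1\le a<b$. Then there exist a positive integer $n$ and a permutation $\pi=(\pi_1,\ldots,\pi_n)$ of $\{1,\ldots,n\}$ such that $\{\pi_{i+1}-\pi_i : 1\le i\le n-1\}=\{a,-b\}$; that is, $(a,-b)$ is a $D$-pair.
   Context: A pair $(p,q)$ of distinct integers is called a $D$-pair if for some $n\ge 1$ there is a permutation $\pi$ of $\{1,\ldots,n\}$ whose set of discrete derivative values $\{\pi_{i+1}-\pi_i: 1\le i\le n-1\}$ equals $\{p,q\}$. *)

(* Defs.v *)
From mathcomp Require Import all_boot all_order all_algebra.
Set Implicit Arguments. Unset Strict Implicit. Unset Printing Implicit Defensive.
Import Order.TTheory GRing.Theory Num.Theory.
Local Open Scope ring_scope.

(* A permutation pi = (pi_1,...,pi_n) of {1,...,n} is represented as the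
   sequence [:: pi_1; ...; pi_n] of integers, required to be a rearrangement
   of [:: 1; 2; ...; n]. *)
Definition is_perm_seq (n : nat) (s : seq int) : Prop :=
  perm_eq s [seq (i%:Z) | i <- iota 1 n].

Definition derivs (s : seq int) : seq int :=
  [seq (x.2 - x.1) | x <- zip s (behead s)].

Definition D_pair (p q : int) : Prop :=
  p <> q /\
  exists (n : nat) (s : seq int),
    (1 <= n)%N /\ is_perm_seq n s /\ (derivs s =i [:: p; q]).

(* Main.v *)
Require Import Defs.
From mathcomp Require Import all_boot all_order all_algebra zify.
Import Order.TTheory GRing.Theory Num.Theory.
Local Open Scope ring_scope.

Lemma derivs_iota (g : nat -> int) (m i : nat) :
  derivs (map g (iota i m.+1)) = map (fun k => g k.+1 - g k) (iota i m).
Proof.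
elim: m i => [|m IH] i //=.
rewrite /derivs /= in IH *. by rewrite IH.
Qed.

Lemma step (a N u : nat) : (u < N)%N -> (a < N)%N ->
  ((u + a) %% N = u + a /\ u + a < N \/ (u + a) %% N + (N - a) = u)%N.
Proof.
move=> hu ha. case: (ltnP (u + a) N) => h.
  left; split => //; by rewrite modn_small.
right. have -> : (u + a = (u + a - N) + N)%N by lia.
rewrite modnDr modn_small; lia.
Qed.

Lemma f_inj (a N k1 k2 : nat) : coprime a N -> (k1 < N)%N -> (k2 < N)%N ->
  (k1 * a = k2 * a %[mod N])%N -> k1 = k2.
Proof.
move=> co h1 h2.
wlog le: k1 k2 h1 h2 / (k1 <= k2)%N.
  move=> W E; case: (leqP k1 k2) => h; first exact: W.
  symmetry; apply: W => //; exact: ltnW.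
move/eqP; rewrite eq_sym eqn_mod_dvd ?leq_mul //.
rewrite -mulnBl Gauss_dvdl; last by rewrite coprime_sym.
move=> d. case E: (k2 - k1)%N => [|n]; first lia.
have := dvdn_leq (isT : (0 < n.+1)%N) (eq_ind _ (fun x => (N %| x)%N) d _ E). lia.
Qed.

Theorem theorem2p5 (a b : int) :
  (1 <= a) -> (a < b) -> coprimez a b ->
  D_pair a (- b).
Proof.
case: a => [a'|//] ha; case: b => [b'|//] hab.
rewrite /coprimez /= => co.
have ha1 : (1 <= a')%N by lia.
have hab' : (a' < b')%N by lia.
set N := (a' + b')%N.
have coN : coprime a' N by rewrite -coprime_modr /N modnDl coprime_modr.
set f := fun k => ((k * a' + N.-1) %% N).+1.
have fk : forall k, (f k.+1 = f k + a' /\ f k + a' <= N \/ f k.+1 + b' = f k)%N.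
  move=> k; rewrite /f.
  have -> : (k.+1 * a' + N.-1 = (k * a' + N.-1) + a')%N by rewrite mulSn; lia.
  rewrite -modnDml.
  have hN : (0 < N)%N by lia.
  have haN : (a' < N)%N by lia.
  have := step a' N _ (ltn_pmod (k * a' + N.-1) hN) haN. lia.
have f0 : f 0%N = N by rewrite /f mul0n add0n modn_small; lia.
have f1 : f 1%N = a'.
  rewrite /f mul1n; have -> : (a' + N.-1 = a'.-1 + N)%N by lia.
  rewrite modnDr modn_small; lia.
have f2 : f 2%N = (2 * a')%N.
  rewrite /f; have -> : (2 * a' + N.-1 = (2 * a').-1 + N)%N by lia.
  rewrite modnDr modn_small; lia.
have P : perm_eq (map f (iota 0 N)) (iota 1 N).
  have U : uniq (map f (iota 0 N)).
    rewrite map_inj_in_uniq ?iota_uniq // => x y; rewrite !mem_iota => hx hy [e].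
    apply: (f_inj _ _ _ _ coN); [lia|lia|].
    apply/eqP; rewrite -(eqn_modDr N.-1); exact/eqP.
  apply: uniq_perm => //; first exact: iota_uniq.
  have S : {subset map f (iota 0 N) <= iota 1 N}.
    move=> x /mapP [k _ ->]; rewrite mem_iota /f.
    have := ltn_pmod (k * a' + N.-1)%N (_ : 0 < N)%N; lia.
  by have [] := uniq_min_size U S; rewrite ?size_map ?size_iota.
split; first by move=> E; lia.
exists N, (map Posz (map f (iota 0 N))); split; first lia.
split; first by rewrite /is_perm_seq; apply: perm_map.
have -> : N = (N.-1).+1 by lia.
rewrite -map_comp derivs_iota => x; rewrite !inE.
apply/mapP/idP.
  move=> [k _ ->] /=; case: (fk k) => H; apply/orP; [left|right]; apply/eqP; lia.
case/orP => /eqP ->.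
  exists 1%N; first by rewrite mem_iota; lia.
  by rewrite /= f1 f2; lia.
exists 0%N; first by rewrite mem_iota; lia.
by rewrite /= f1 f0; lia.
Qed.
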